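(* Let $m,n,l>0$ be pairwise coprime square-free integers with $n>m$, and let $K=\mathbb{Q}(\sqrt{-ml},\sqrt{-nl})$. Then \[ M(\mathcal{O}_K)\ge \begin{cases} \tfrac{1}{256}\, l n & \text{if } n>l,\\[2pt] \tfrac{1}{2304}\, l^2 & \text{if } l>n. \end{cases} \] Moreover, in all cases $\tfrac{1}{256}\, l n \le M(\mathcal{O}_K)$.
   Context: For a nonconstant polynomial $f(x)=c\prod_{i=1}^d (x-\alpha_i)\in\mathbb{C}[x]$, the Mahler measure is $M(f)=|c|\prod_{|\alpha_i|\ge 1}|\alpha_i|$. For an algebraic number $\alpha$, $M(\alpha)$ is the Mahler measure of its minimal polynomial over $\mathbb{Z}$ (with content $1$). For a number field $K$ with ring of integers $\mathcal{O}_K$, $M(\mathcal{O}_K)=\min\{M(\alpha):\alpha\in\mathcal{O}_K,\ \mathbb{Q}(\alpha)=K\}$. *)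

(* Defs.v *)
From HB Require Import structures.
From mathcomp Require Import all_boot all_order all_algebra all_field.
Set Implicit Arguments. Unset Strict Implicit. Unset Printing Implicit Defensive.
Import Order.TTheory GRing.Theory Num.Theory.
Local Open Scope ring_scope.

Definition roots_of (f : {poly algC}) : seq algC :=
  sval (closed_field_poly_normal f).

Definition mahler (f : {poly algC}) : algC :=
  `|lead_coef f| * \prod_(z <- roots_of f) Num.max 1 `|z|.

(* p is the minimal polynomial of alpha over Z with content 1 (and positive
   leading coefficient): a primitive integer multiple of the monic minimal
   polynomial of alpha over Q. *)
Definition is_Zminpoly (alpha : algC) (p : {poly int}) : Prop :=
  zcontents p = 1 /\
  map_poly (intr : int -> algC) p = (lead_coef p)%:~R *: minCpoly alpha.

Definition mahler_num (alpha : algC) (M : algC) : Prop :=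
  exists2 p, is_Zminpoly alpha p & M = mahler (map_poly (intr : int -> algC) p).

Definition sqa (m n l : nat) : algC := sqrtC (- (m * l)%:R).
Definition sqb (m n l : nat) : algC := sqrtC (- (n * l)%:R).

Definition inK (m n l : nat) (x : algC) : Prop :=
  exists r : rat * rat * rat * rat,
    x = ratr r.1.1.1 + ratr r.1.1.2 * sqa m n l + ratr r.1.2 * sqb m n l
        + ratr r.2 * (sqa m n l * sqb m n l).

Definition inQgen (alpha x : algC) : Prop :=
  exists q : {poly rat}, x = (map_poly ratr q).[alpha].

Definition inOK (m n l : nat) (x : algC) : Prop := inK m n l x /\ x \in Aint.

Definition squarefree (k : nat) : Prop := forall p, prime p -> ~~ (p * p %| k)%N.

(* Main.v *)
Require Import Defs.
From HB Require Import structures.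
From mathcomp Require Import all_boot all_order all_algebra all_field.
From mathcomp Require Import ring lra zify.
Import Order.TTheory GRing.Theory Num.Theory.
Local Open Scope ring_scope.

Lemma int_of_sq (k : nat) (q : rat) : squarefree k -> (0 < k)%N ->
  q ^+ 2 * k%:R \is a Num.int -> q \is a Num.int.
Proof.
move=> sk k0 /intrP [t Ht].
rewrite Qint_def.
have d0 : (0 < denq q)%R := denq_gt0 q.
have hd : (denq q)%:~R != 0 :> rat by rewrite intr_eq0 gt_eqF.
have E : (numq q) ^+ 2 * k%:R = t * (denq q) ^+ 2 :> int.
  apply: (@intr_inj rat). rewrite !expr2 !intrM natz /=.
  move: Ht; rewrite -{1}(divq_num_den q) => Ht.
  rewrite -[(k%:Z)%:~R]/(k%:R : rat).
  rewrite -[t%:~R]Ht. field. exact: hd.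
have E2 : (`|numq q| ^ 2 * k = `|t| * `|denq q| ^ 2)%N.
  have := congr1 (fun z : int => `|z|%N) E. rewrite !abszM natz /= => H.
  rewrite !expnS !expn0 !muln1. exact: H.
have cd : coprime (`|denq q| ^ 2) (`|numq q| ^ 2).
  rewrite coprimeXl // coprimeXr // coprime_sym; exact: coprime_num_den.
have dv : (`|denq q| ^ 2 %| k)%N.
  rewrite -(Gauss_dvdl _ cd) mulnC E2.
  exact: dvdn_mull.
have d1 : `|denq q|%N = 1%N.
  case: (ltngtP `|denq q| 1) => // h.
  - by move: d0 h; case: (denq q) => [[|j]|j].
  - have pp := pdiv_prime h.
    have dp := pdiv_dvd `|denq q|.
    have : (pdiv `|denq q| * pdiv `|denq q| %| k)%N.
      apply: dvdn_trans dv; rewrite expnS expn1; exact: dvdn_mul.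
    by rewrite (negbTE (sk _ pp)).
by rewrite -(gez0_abs (ltW d0)) d1.
Qed.

Lemma PRODSUB (F : algC -> algC) (t s : seq algC) : (forall z, 1 <= F z) ->
  uniq t -> {subset t <= s} -> \prod_(z <- t) F z <= \prod_(z <- s) F z.
Proof.
move=> F1; elim: t s => [|x t IH] s /=.
  move=> _ _; rewrite big_nil; elim: s => [|y s' IHs]; rewrite ?big_nil ?big_cons //.
  exact: mulr_ege1 (F1 y) IHs.
case/andP=> xt ut sub.
have xs : x \in s by apply: sub; rewrite mem_head.
rewrite big_cons (perm_big _ (perm_to_rem xs)) big_cons.
have F0 : 0 <= F x by apply: le_trans (F1 x); exact: ler01.
apply: ler_wpM2l => //; apply: IH => // y yt.
apply: rem_mem; first by apply: contraNneq xt => <-.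
by apply: sub; rewrite in_cons yt orbT.
Qed.

Lemma not_sq (k : nat) (q : rat) : squarefree k -> (1 < k)%N -> q ^+ 2 != k%:R.
Proof.
move=> sk k1; apply/eqP => e.
have : q \is a Num.int.
  have := @int_of_sq k q sk (ltnW k1); apply.
  by rewrite e -natrM rpred_nat.
move=> /intrP [t et].
have E : (`|t| * `|t| = k)%N.
  have : t ^+ 2 = k%:R :> int by apply: (@intr_inj rat); rewrite rmorphXn /= -et e natz.
  move/(congr1 (fun z : int => `|z|%N)); rewrite abszX natz /= => <-.
  by rewrite expnS expn1.
have t1 : (1 < `|t|)%N.
  case: (`|t|%N) E k1 => [|[|j]] //= <- //.
have pp := pdiv_prime t1.
have : (pdiv `|t| * pdiv `|t| %| k)%N by rewrite -E; apply: dvdn_mul; exact: pdiv_dvd.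
by rewrite (negbTE (sk _ pp)).
Qed.

Lemma sqf_mul (a b : nat) : coprime a b -> squarefree a -> squarefree b -> squarefree (a * b).
Proof.
move=> cab sa sb p pp; apply/negP => H.
have [pa|npa] := boolP (p %| a)%N.
- have cpb : coprime (p * p) b.
    rewrite coprimeMl andbb; apply: coprime_dvdl pa cab.
  by move: H; rewrite Gauss_dvdl // (negbTE (sa p pp)).
- have cpa : coprime (p * p) a.
    by rewrite coprimeMl andbb prime_coprime.
  by move: H; rewrite mulnC Gauss_dvdl // (negbTE (sb p pp)).
Qed.

Lemma NS3 (m n : nat) : coprime m n -> squarefree m -> squarefree n -> (0 < m)%N -> (m < n)%N ->
  forall u v : rat, u ^+ 2 = v ^+ 2 * (m * n)%:R -> u = 0 /\ v = 0.
Proof.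
move=> cmn sm sn m0 mn u v e.
have [v0|v0] := eqVneq v 0.
  by move: e; rewrite v0 expr0n /= mul0r => /eqP; rewrite expf_eq0 /= => /eqP.
have : (u / v) ^+ 2 != (m * n)%:R.
  apply: not_sq; first exact: sqf_mul.
  nia.
by rewrite expr_div_n e mulrC mulKf ?expf_neq0 // eqxx.
Qed.

Lemma ratr_injC : injective (ratr : rat -> algC).
Proof. exact: fmorph_inj. Qed.

Lemma IND (m n l : nat) (A B : algC) :
  (0 < m)%N -> (0 < l)%N ->
  A * A = - (m * l)%:R -> B * B = - (n * l)%:R -> A^* = - A -> B^* = - B ->
  (forall u v : rat, u ^+ 2 = v ^+ 2 * (m * n)%:R -> u = 0 /\ v = 0) ->
  forall x0 x1 x2 x3 : rat,
  ratr x0 + ratr x1 * A + ratr x2 * B + ratr x3 * (A * B) = 0 ->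
  [/\ x0 = 0, x1 = 0, x2 = 0 & x3 = 0].
Proof.
move=> m0 l0 hA hB cA cB hns x0 x1 x2 x3 e.
have ec : ratr x0 - ratr x1 * A - ratr x2 * B + ratr x3 * (A * B) = 0.
  have := congr1 (fun z => z^*) e.
  have cr : forall q, (ratr q : algC)^* = ratr q := fun q => conj_Crat (Crat_rat q).
  rewrite /= !rmorphD (rmorphM _ (ratr x1)) (rmorphM _ (ratr x2)) (rmorphM _ (ratr x3)) (rmorphM _ A) !fmorph_rat /= cA cB conjC0 => <-; ring.
have h1 : ratr x0 = - ratr x3 * (A * B).
  have H : 2%:R * (ratr x0 + ratr x3 * (A * B)) =
     (ratr x0 + ratr x1 * A + ratr x2 * B + ratr x3 * (A * B)) +
     (ratr x0 - ratr x1 * A - ratr x2 * B + ratr x3 * (A * B)) by ring.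
  move: H; rewrite e ec addr0 => /eqP; rewrite mulf_eq0 pnatr_eq0 /= addr_eq0.
  by move/eqP => ->; rewrite mulNr.
have h2 : ratr x1 * A = - ratr x2 * B.
  have H : 2%:R * (ratr x1 * A + ratr x2 * B) =
     (ratr x0 + ratr x1 * A + ratr x2 * B + ratr x3 * (A * B)) -
     (ratr x0 - ratr x1 * A - ratr x2 * B + ratr x3 * (A * B)) by ring.
  move: H; rewrite e ec subr0 => /eqP; rewrite mulf_eq0 pnatr_eq0 /= addr_eq0.
  by move/eqP => ->; rewrite mulNr.
have s1 : x0 ^+ 2 = (x3 * l%:R) ^+ 2 * (m * n)%:R.
  apply: ratr_injC. rewrite rmorphXn /= h1 rmorphM rmorphXn /= rmorphM /= !ratr_nat.
  rewrite natrM natrM in hA hB *. ring: hA hB.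
have l0' : (l%:R : rat) != 0 by rewrite pnatr_eq0 -lt0n.
have m0' : (m%:R : rat) != 0 by rewrite pnatr_eq0 -lt0n.
have [ex0 ex3] := hns _ _ s1.
have {}ex3 : x3 = 0 by move/eqP: ex3; rewrite mulf_eq0 (negbTE l0') orbF => /eqP.
have t : x1 ^+ 2 * m%:R * l%:R = x2 ^+ 2 * n%:R * l%:R.
  apply: ratr_injC. rewrite natrM in hA. rewrite natrM in hB.
  transitivity (- (ratr x1 * A) ^+ 2); first by ring: hA.
  rewrite h2; ring: hB.
have s2 : (x1 * m%:R) ^+ 2 = x2 ^+ 2 * (m * n)%:R.
  apply: (mulIf l0'). rewrite natrM. 
  transitivity (x1 ^+ 2 * m%:R * l%:R * m%:R); first ring.
  rewrite t; ring.
have [ex1 ex2] := hns _ _ s2.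
have {}ex1 : x1 = 0 by move/eqP: ex1; rewrite mulf_eq0 (negbTE m0') orbF => /eqP.
by split.
Qed.

Lemma FLIP (u v : algC) (a b : rat) : u * u = ratr a -> v * v = ratr b ->
  forall f : {poly rat}, forall p0 p1 q0 q1 : rat, exists P0 P1 Q0 Q1 : rat,
 (map_poly ratr f).[ratr p0 + ratr p1 * u + (ratr q0 + ratr q1 * u) * v]
   = ratr P0 + ratr P1 * u + (ratr Q0 + ratr Q1 * u) * v /\
 (map_poly ratr f).[ratr p0 + ratr p1 * u - (ratr q0 + ratr q1 * u) * v]
   = ratr P0 + ratr P1 * u - (ratr Q0 + ratr Q1 * u) * v.
Proof.
move=> hu hv f p0 p1 q0 q1.
elim/poly_ind: f => [|g c [P0 [P1 [Q0 [Q1 [e1 e2]]]]]].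
  by exists 0, 0, 0, 0; rewrite map_poly0 !horner0 rmorph0; split; ring.
exists (P0 * p0 + P1 * p1 * a + (Q0 * q0 + Q1 * q1 * a) * b + c)%R,
  (P0 * p1 + P1 * p0 + (Q0 * q1 + Q1 * q0) * b)%R,
  (P0 * q0 + P1 * q1 * a + Q0 * p0 + Q1 * p1 * a)%R, (P0 * q1 + P1 * q0 + Q0 * p1 + Q1 * p0)%R.
rewrite rmorphD rmorphM /= map_polyX map_polyC /= !hornerE e1 e2.
by split; ring: hu hv.
Qed.

Lemma PRIM (u : algC) (a : rat) : u * u = ratr a ->
  forall f : {poly rat}, forall x0 s : rat, exists r0 r1 : rat,
 (map_poly ratr f).[ratr x0 + ratr s * u] = ratr r0 + ratr r1 * u.
Proof.
move=> hu f x0 s.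
elim/poly_ind: f => [|g c [R0 [R1 e1]]].
  by exists 0, 0; rewrite map_poly0 !horner0 rmorph0; ring.
exists (R0 * x0 + R1 * s * a + c)%R, (R0 * s + R1 * x0)%R.
rewrite rmorphD rmorphM /= map_polyX map_polyC /= !hornerE e1.
by ring: hu.
Qed.

Lemma isq (q : rat) : q \is a Num.int -> q != 0 -> 1 <= q ^+ 2.
Proof.
move=> /intrP [t ->]; rewrite intr_eq0 -rmorphXn /= ler1z expr2 => t0; lia.
Qed.

Lemma RATF (m n l : nat) (x y z w : rat) : (0 < m)%N -> (0 < n)%N -> (0 < l)%N ->
 (forall u v : rat, u ^+ 2 * m%:R = v ^+ 2 * n%:R -> u = 0 /\ v = 0) ->
 (4%:R * y) \is a Num.int -> (4%:R * z) \is a Num.int -> (4%:R * w * l%:R) \is a Num.int ->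
 ~ (y = 0 /\ z = 0) -> ~ (z = 0 /\ w = 0) ->
 let P := x ^+ 2 + w ^+ 2 * ((m * l)%:R * (n * l)%:R) + y ^+ 2 * (m * l)%:R + z ^+ 2 * (n * l)%:R in
 let N := P ^+ 2 - 4%:R * (x * w - y * z) ^+ 2 * ((m * l)%:R * (n * l)%:R) in
 ((l * n)%:R / 256%:R <= P \/ (l * n)%:R / 256%:R <= N) /\ (l ^ 2)%:R / 2304%:R <= N.
Proof.
move=> m0 n0 l0 hns iy iz iw nyz nzw P N.
have hm : 1 <= (m%:R : rat) by rewrite ler1n.
have hn : 1 <= (n%:R : rat) by rewrite ler1n.
have hl : 1 <= (l%:R : rat) by rewrite ler1n.
have nlp : 0 <= (n%:R : rat) * l%:R by apply: mulr_ge0; lra.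
have EP : P = x ^+ 2 + (4%:R * w * l%:R) ^+ 2 * (m%:R * n%:R) / 16%:R
            + (4%:R * y) ^+ 2 * (m%:R * l%:R) / 16%:R + (4%:R * z) ^+ 2 * (n%:R * l%:R) / 16%:R.
  by rewrite /P !natrM; field.
split.
- have [z0|z0] := eqVneq z 0.
  + right.
    have y0 : y != 0 by apply/eqP => y0; apply: nyz; split.
    have w0 : w != 0 by apply/eqP => w0; apply: nzw; split.
    have hY : 1 <= (4%:R * y) ^+ 2 by apply: isq => //; rewrite mulf_neq0 // pnatr_eq0.
    have hW : 1 <= (4%:R * w * l%:R) ^+ 2 by apply: isq => //; rewrite !mulf_neq0 // pnatr_eq0 -?lt0n.
    set K := (4%:R * w * l%:R) ^+ 2 * (4%:R * y) ^+ 2 * (m%:R * m%:R).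
    have hK : 1 <= K by rewrite /K; apply: mulr_ege1; [apply: mulr_ege1 | apply: mulr_ege1].
    have EN : N = (x ^+ 2 - w ^+ 2 * ((m * l)%:R * (n * l)%:R)) ^+ 2
       + 2%:R * x ^+ 2 * y ^+ 2 * (m * l)%:R + (y ^+ 2 * (m * l)%:R) ^+ 2
       + 2%:R * K * (n%:R * l%:R) / 256%:R.
      by rewrite /N /P /K z0 !natrM; field.
    have h1 : n%:R * l%:R <= K * (n%:R * l%:R) by rewrite ler_peMl.
    have s1 := sqr_ge0 (x ^+ 2 - w ^+ 2 * ((m * l)%:R * (n * l)%:R)).
    have s2 := sqr_ge0 (y ^+ 2 * (m * l)%:R).
    have s3 : 0 <= 2%:R * x ^+ 2 * y ^+ 2 * (m * l)%:R :=
      mulr_ge0 (mulr_ge0 (mulr_ge0 (ler0n _ 2) (sqr_ge0 x)) (sqr_ge0 y)) (ler0n _ _).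
    rewrite EN natrM mulrC. lra.
  + left.
    have i16 : 0 <= (16%:R : rat)^-1 by rewrite invr_ge0 ler0n.
    have hZ : 1 <= (4%:R * z) ^+ 2 by apply: isq => //; rewrite mulf_neq0 // pnatr_eq0.
    have h1 : n%:R * l%:R <= (4%:R * z) ^+ 2 * (n%:R * l%:R) by rewrite ler_peMl.
    have s1 : 0 <= (4%:R * w * l%:R) ^+ 2 * (m%:R * n%:R) / 16%:R :=
      mulr_ge0 (mulr_ge0 (sqr_ge0 _) (mulr_ge0 (ler0n _ _) (ler0n _ _))) i16.
    have s2 : 0 <= (4%:R * y) ^+ 2 * (m%:R * l%:R) / 16%:R :=
      mulr_ge0 (mulr_ge0 (sqr_ge0 _) (mulr_ge0 (ler0n _ _) (ler0n _ _))) i16.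
    have s3 := sqr_ge0 x.
    rewrite EP natrM mulrC. lra.
- have nE : y ^+ 2 * m%:R != z ^+ 2 * n%:R.
    by apply/eqP => /hns [y0 z0]; apply: nyz.
  set Q := (4%:R * y) ^+ 2 * m%:R - (4%:R * z) ^+ 2 * n%:R.
  have iQ : Q \is a Num.int by rewrite /Q; apply: rpredB; apply: rpredM; rewrite ?rpred_nat //; exact: rpredX.
  have Q0 : Q != 0.
    apply: contra nE; rewrite /Q subr_eq0 !exprMn !mulrA => /eqP e.
    apply/eqP; apply: (mulfI (x := 4%:R ^+ 2)); first by rewrite expf_neq0 // pnatr_eq0.
    by rewrite !mulrA e.
  have hQ := isq Q iQ Q0.
  have EN : N = (x ^+ 2 - w ^+ 2 * ((m * l)%:R * (n * l)%:R)) ^+ 2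
     + 2%:R * (n * l)%:R * (x * z + w * y * (m * l)%:R) ^+ 2
     + 2%:R * (m * l)%:R * (x * y + w * z * (n * l)%:R) ^+ 2
     + (l%:R * l%:R) * Q ^+ 2 / 256%:R.
    by rewrite /N /P /Q !natrM; field.
  have h1 : l%:R * l%:R <= Q ^+ 2 * (l%:R * l%:R) by rewrite ler_peMl ?mulr_ge0 //; lra.
  have s1 := sqr_ge0 (x ^+ 2 - w ^+ 2 * ((m * l)%:R * (n * l)%:R)).
  have s2 : 0 <= 2%:R * (n * l)%:R * (x * z + w * y * (m * l)%:R) ^+ 2 :=
    mulr_ge0 (mulr_ge0 (ler0n _ _) (ler0n _ _)) (sqr_ge0 _).
  have s3 : 0 <= 2%:R * (m * l)%:R * (x * y + w * z * (n * l)%:R) ^+ 2 :=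
    mulr_ge0 (mulr_ge0 (ler0n _ _) (ler0n _ _)) (sqr_ge0 _).
  have ll : 0 <= (l%:R : rat) * l%:R by apply: mulr_ge0; lra.
  rewrite EN natrX expr2. lra.
Qed.

Definition Ev (A B : algC) (c0 c1 c2 c3 : rat) : algC :=
  ratr c0 + ratr c1 * A + ratr c2 * B + ratr c3 * (A * B).

Lemma conj_neg (A : algC) (k : nat) : A * A = - k%:R -> (0 < k)%N -> A^* = - A.
Proof.
move=> hA k0.
have e : A^* * A^* = A * A by rewrite -(rmorphM _ A A) /= hA rmorphN rmorph_nat.
have : (A^* - A) * (A^* + A) = 0 by ring: e.
move/eqP; rewrite mulf_eq0 subr_eq0 addr_eq0 => /orP [/eqP cA|/eqP //].
have : 0 <= `|A| ^+ 2 by rewrite exprn_ge0.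
rewrite normCK cA hA oppr_ge0 lern0. by move: k0; case: (k).
Qed.

Lemma mx1 (z:algC): 1 <= Num.max 1 `|z|.
Proof. rewrite /Order.max; case: ifP => h //; exact: ltW. Qed.
Lemma mx2 (z:algC): `|z| <= Num.max 1 `|z|.
Proof. rewrite /Order.max; case: ifP => h //.
by rewrite real_leNgt ?h // ?realE ?normr_ge0 ?ler01. Qed.

Lemma int_from_Aint (c : algC) (q : rat) (k : nat) : squarefree k -> (0 < k)%N ->
  c \in Aint -> c ^+ 2 = ratr (q ^+ 2 * k%:R) \/ c ^+ 2 = ratr (- (q ^+ 2 * k%:R)) ->
  q \is a Num.int.
Proof.
move=> sk k0 ca H.
have hc : c ^+ 2 \is a Num.int.
  by apply: Cint_rat_Aint; [case: H => ->; exact: Crat_rat | exact: rpredX].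
case: H => e; rewrite e Cint_rat in hc; first exact: int_of_sq hc.
by rewrite rpredN in hc; exact: int_of_sq hc.
Qed.

Lemma BND (R : numDomainType) (m1 m2 u1 u2 : R) : 0 <= u1 -> 0 <= u2 -> 1 <= m1 -> 1 <= m2 ->
  u1 <= m1 -> u2 <= m2 ->
  [/\ u1 * u1 <= m1 * (m2 * (m1 * (m2 * 1))), u2 * u2 <= m1 * (m2 * (m1 * (m2 * 1)))
    & (u1 * u1) * (u2 * u2) <= m1 * (m2 * (m1 * (m2 * 1)))].
Proof.
move=> u10 u20 m11 m21 h1 h2.
have m10 : 0 <= m1 by apply: le_trans m11; exact: ler01.
have m20 : 0 <= m2 by apply: le_trans m21; exact: ler01.
have E : m1 * (m2 * (m1 * (m2 * 1))) = (m1 * m1) * (m2 * m2) by ring.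
have s1 : u1 * u1 <= m1 * m1 by apply: ler_pM.
have s2 : u2 * u2 <= m2 * m2 by apply: ler_pM.
have o1 : 1 <= m1 * m1 by apply: mulr_ege1.
have o2 : 1 <= m2 * m2 by apply: mulr_ege1.
have q1 : 0 <= m1 * m1 by apply: mulr_ge0.
have q2 : 0 <= m2 * m2 by apply: mulr_ge0.
rewrite E; split.
- apply: le_trans s1 _; rewrite -{1}(mulr1 (m1 * m1)); exact: ler_wpM2l.
- apply: le_trans s2 _; rewrite -{1}(mul1r (m2 * m2)); exact: ler_wpM2r.
- by apply: ler_pM => //; apply: mulr_ge0.
Qed.

Theorem proposition4p1 (m n l : nat) :
  (0 < m)%N -> (0 < n)%N -> (0 < l)%N ->
  coprime m n -> coprime m l -> coprime n l ->
  squarefree m -> squarefree n -> squarefree l ->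
  (m < n)%N ->
  forall (alpha : algC) (M : algC),
    inOK m n l alpha ->
    (forall x, inK m n l x <-> inQgen alpha x) ->
    mahler_num alpha M ->
    [/\ ((l < n)%N -> (l * n)%:R / 256%:R <= M),
        ((n < l)%N -> (l ^ 2)%:R / 2304%:R <= M)
      & (l * n)%:R / 256%:R <= M].
Proof.
move=> m0 n0 l0 cmn cml cnl sm sn sl mn alpha M [[r Ealpha] Aalpha] Hgen [p [zp Ep] EM].
have inKA : inK m n l (sqa m n l).
  by exists (0, 1, 0, 0); rewrite /= rmorph0 rmorph1; ring.
have inKB : inK m n l (sqb m n l).
  by exists (0, 0, 1, 0); rewrite /= rmorph0 rmorph1; ring.
have hA : sqa m n l * sqa m n l = - (m * l)%:R by rewrite -expr2 /sqa sqrtCK.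
have hB : sqb m n l * sqb m n l = - (n * l)%:R by rewrite -expr2 /sqb sqrtCK.
move: Ealpha inKA inKB hA hB.
set A := sqa m n l; set B := sqb m n l.
case: r => [[[x y] z] w] /= Ealpha inKA inKB hA hB.
have hA' : A * A = ratr (- (m * l)%:R) by rewrite hA; ring.
have hB' : B * B = ratr (- (n * l)%:R) by rewrite hB; ring.
have AB2 : (A * B) * (A * B) = ratr ((m * l)%:R * (n * l)%:R).
  by ring: hA hB.
have cA : A^* = - A by apply: (conj_neg _ _ hA); rewrite muln_gt0 m0 l0.
have cB : B^* = - B by apply: (conj_neg _ _ hB); rewrite muln_gt0 n0 l0.
have hns := NS3 _ _ cmn sm sn m0 mn.
have ind := IND _ _ _ _ _ m0 l0 hA hB cA cB hns.
have Ev_eq : forall c0 c1 c2 c3 d0 d1 d2 d3, Ev A B c0 c1 c2 c3 = Ev A B d0 d1 d2 d3 ->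
    [/\ c0 = d0, c1 = d1, c2 = d2 & c3 = d3].
  move=> c0 c1 c2 c3 d0 d1 d2 d3 e.
  have [] := ind (c0 - d0) (c1 - d1) (c2 - d2) (c3 - d3).
    transitivity (Ev A B c0 c1 c2 c3 - Ev A B d0 d1 d2 d3); first by rewrite /Ev; ring.
    by rewrite e subrr.
  by move=> /eqP; rewrite subr_eq0 => /eqP -> /eqP; rewrite subr_eq0 => /eqP ->
     /eqP; rewrite subr_eq0 => /eqP -> /eqP; rewrite subr_eq0 => /eqP ->.
have conjEv : forall c0 c1 c2 c3, (Ev A B c0 c1 c2 c3)^* = Ev A B c0 (- c1) (- c2) c3.
  move=> c0 c1 c2 c3; rewrite /Ev.
  rewrite !rmorphD (rmorphM _ (ratr c1)) (rmorphM _ (ratr c2)) (rmorphM _ (ratr c3))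
     (rmorphM _ A) !fmorph_rat /= cA cB !rmorphN; ring.
have Ealpha' : alpha = Ev A B x y z w by [].
have nyz : ~ (y = 0 /\ z = 0).
  case=> y0 z0; have [q eq] := (Hgen A).1 inKA.
  have [r0 [r1 er]] := PRIM _ _ AB2 q x w.
  have ea : alpha = ratr x + ratr w * (A * B) by rewrite Ealpha y0 z0 rmorph0; ring.
  rewrite ea er in eq.
  have H : ratr (- r0) + ratr 1 * A + ratr 0 * B + ratr (- r1) * (A * B) = 0.
    transitivity (A - (ratr r0 + ratr r1 * (A * B))); first by ring.
    by rewrite -eq subrr.
  have [_ h1 _ _] := ind _ _ _ _ H.
  by move/eqP: h1; rewrite oner_eq0.
have nyw : ~ (y = 0 /\ w = 0).
  case=> y0 w0; have [q eq] := (Hgen A).1 inKA.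
  have [r0 [r1 er]] := PRIM _ _ hB' q x z.
  have ea : alpha = ratr x + ratr z * B by rewrite Ealpha y0 w0 rmorph0; ring.
  rewrite ea er in eq.
  have H : ratr (- r0) + ratr 1 * A + ratr (- r1) * B + ratr 0 * (A * B) = 0.
    transitivity (A - (ratr r0 + ratr r1 * B)); first by ring.
    by rewrite -eq subrr.
  have [_ h1 _ _] := ind _ _ _ _ H.
  by move/eqP: h1; rewrite oner_eq0.
have nzw : ~ (z = 0 /\ w = 0).
  case=> z0 w0; have [q eq] := (Hgen B).1 inKB.
  have [r0 [r1 er]] := PRIM _ _ hA' q x y.
  have ea : alpha = ratr x + ratr y * A by rewrite Ealpha z0 w0 rmorph0; ring.
  rewrite ea er in eq.
  have H : ratr (- r0) + ratr (- r1) * A + ratr 1 * B + ratr 0 * (A * B) = 0.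
    transitivity (B - (ratr r0 + ratr r1 * A)); first by ring.
    by rewrite -eq subrr.
  have [_ _ h1 _] := ind _ _ _ _ H.
  by move/eqP: h1; rewrite oner_eq0.
set a1 := Ev A B x y z w.
set a2 := Ev A B x y (- z) (- w).
set a3 := Ev A B x (- y) (- z) w.
set a4 := Ev A B x (- y) z (- w).
have c13 : a1^* = a3 by rewrite /a1 conjEv.
have c24 : a2^* = a4 by rewrite /a2 conjEv opprK.
have [q0 [Dq0 _] _] := minCpolyP alpha.
have r1 : (map_poly ratr q0).[alpha] = 0 by rewrite -Dq0; exact/eqP/root_minCpoly.
have R1 : root (minCpoly alpha) a1 by rewrite /a1 -Ealpha' root_minCpoly.
have R3 : root (minCpoly alpha) a3.
  by rewrite -c13 /a1 -Ealpha' -{1}(minCpoly_aut Num.conj_op alpha) root_minCpoly.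
have R2 : root (minCpoly alpha) a2.
  have [P0 [P1 [Q0 [Q1 [e1 e2]]]]] := FLIP _ _ _ _ hA' hB' q0 x y z w.
  have : ratr P0 + ratr P1 * A + (ratr Q0 + ratr Q1 * A) * B = 0.
    by rewrite -e1 -r1 Ealpha; congr (_.[_]); ring.
  move=> e0.
  have H : ratr P0 + ratr P1 * A + ratr Q0 * B + ratr Q1 * (A * B) = 0 by rewrite -e0; ring.
  have [h0 h1 h2 h3] := ind _ _ _ _ H.
  rewrite Dq0 /root; apply/eqP.
  transitivity ((map_poly ratr q0).[ratr x + ratr y * A - (ratr z + ratr w * A) * B]).
    by congr (_.[_]); rewrite /a2 /Ev !rmorphN; ring.
  by rewrite e2 h0 h1 h2 h3 rmorph0; ring.
have R4 : root (minCpoly alpha) a4.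
  have [P0 [P1 [Q0 [Q1 [e1 e2]]]]] := FLIP _ _ _ _ hB' hA' q0 x z y w.
  have : ratr P0 + ratr P1 * B + (ratr Q0 + ratr Q1 * B) * A = 0.
    by rewrite -e1 -r1 Ealpha; congr (_.[_]); ring.
  move=> e0.
  have H : ratr P0 + ratr Q0 * A + ratr P1 * B + ratr Q1 * (A * B) = 0 by rewrite -e0; ring.
  have [h0 h2 h1 h3] := ind _ _ _ _ H.
  rewrite Dq0 /root; apply/eqP.
  transitivity ((map_poly ratr q0).[ratr x + ratr z * B - (ratr y + ratr w * B) * A]).
    by congr (_.[_]); rewrite /a4 /Ev !rmorphN; ring.
  by rewrite e2 h0 h1 h2 h3 rmorph0; ring.
have neg0 : forall c : rat, c = - c -> c = 0 by move=> c hc; lra.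
have neg0' : forall c : rat, - c = c -> c = 0 by move=> c hc; lra.
have U : uniq [:: a1; a2; a3; a4].
  rewrite /= !inE !negb_or; repeat (apply/andP; split); try by [].
  - by apply/eqP => /Ev_eq [_ _ /neg0 h1 /neg0 h2]; apply: nzw.
  - by apply/eqP => /Ev_eq [_ /neg0 h1 /neg0 h2 _]; apply: nyz.
  - by apply/eqP => /Ev_eq [_ /neg0 h1 _ /neg0 h2]; apply: nyw.
  - by apply/eqP => /Ev_eq [_ /neg0 h1 _ /neg0' h2]; apply: nyw.
  - by apply/eqP => /Ev_eq [_ /neg0 h1 /neg0' h2 _]; apply: nyz.
  - by apply/eqP => /Ev_eq [_ _ /neg0' h1 /neg0 h2]; apply: nzw.
have Zf0 : minCpoly alpha \is a polyOver Num.int := Aalpha.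
have I1 : a1 \in Aint := root_monic_Aint R1 (minCpoly_monic _) Zf0.
have I2 : a2 \in Aint := root_monic_Aint R2 (minCpoly_monic _) Zf0.
have I3 : a3 \in Aint := root_monic_Aint R3 (minCpoly_monic _) Zf0.
have I4 : a4 \in Aint := root_monic_Aint R4 (minCpoly_monic _) Zf0.
have iy : (4%:R * y) \is a Num.int.
  apply: (int_from_Aint (a1 + a2 - a3 - a4) _ (m * l) (sqf_mul _ _ cml sm sl)).
  - by rewrite muln_gt0 m0 l0.
  - exact: (rpredB (rpredB (rpredD I1 I2) I3) I4).
  - by right; rewrite /a1 /a2 /a3 /a4 /Ev; ring: hA.
have iz : (4%:R * z) \is a Num.int.
  apply: (int_from_Aint (a1 - a2 - a3 + a4) _ (n * l) (sqf_mul _ _ cnl sn sl)).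
  - by rewrite muln_gt0 n0 l0.
  - exact: (rpredD (rpredB (rpredB I1 I2) I3) I4).
  - by right; rewrite /a1 /a2 /a3 /a4 /Ev; ring: hB.
have iw : (4%:R * w * l%:R) \is a Num.int.
  apply: (int_from_Aint (a1 - a2 + a3 - a4) _ (m * n) (sqf_mul _ _ cmn sm sn)).
  - by rewrite muln_gt0 m0 n0.
  - exact: (rpredB (rpredD (rpredB I1 I2) I3) I4).
  - left; rewrite /a1 /a2 /a3 /a4 /Ev. rewrite natrM in hA. rewrite natrM in hB.
    rewrite natrM; ring: hA hB.
have p0 : p != 0 by apply/eqP => p0; move: zp; rewrite p0 zcontents0.
set c : algC := (lead_coef p)%:~R.
have c0 : c != 0 by rewrite /c intr_eq0 lead_coef_eq0.
have hc1 : 1 <= `|c|.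
  by rewrite /c -intr_norm ler1z -gtz0_ge1 normr_gt0 lead_coef_eq0.
have Lf : lead_coef (map_poly intr p : {poly algC}) = c.
  by rewrite Ep lead_coefZ (monicP (minCpoly_monic _)) mulr1.
have fnz : (map_poly intr p : {poly algC}) != 0.
  by rewrite Ep scaler_eq0 negb_or c0 minCpoly_eq0.
move: EM; rewrite /mahler /roots_of; case: (closed_field_poly_normal _) => rs /= Ef EM.
have inrs : forall a, root (minCpoly alpha) a -> a \in rs.
  move=> a ra; have : root (map_poly intr p : {poly algC}) a by rewrite Ep rootZ.
  by rewrite {1}Ef rootZ ?Lf // root_prod_XsubC.
have P1 : 1 <= \prod_(t <- rs) Num.max 1 `|t|.
  have := PRODSUB (fun t => Num.max 1 `|t|) [::] rs mx1 isT; rewrite big_nil; apply.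
  by [].
have PS : \prod_(t <- [:: a1; a2; a3; a4]) Num.max 1 `|t| <= \prod_(t <- rs) Num.max 1 `|t|.
  apply: PRODSUB => //; first exact: mx1.
  by move=> t; rewrite !inE => /or4P [] /eqP ->; apply: inrs.
have MT : \prod_(t <- rs) Num.max 1 `|t| <= M.
  rewrite EM Lf; apply: ler_peMl => //; apply: le_trans P1; exact: ler01.
rewrite !big_cons big_nil in PS.
have na3 : `|a3| = `|a1| by rewrite -c13 norm_conjC.
have na4 : `|a4| = `|a2| by rewrite -c24 norm_conjC.
rewrite na3 na4 in PS.
have [b1 b2 b3] := BND _ _ _ _ _ (normr_ge0 a1) (normr_ge0 a2) (mx1 a1) (mx1 a2) (mx2 a1) (mx2 a2).
have e1 : `|a1| * `|a1| = a1 * a3 by rewrite -expr2 normCK c13.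
have e2 : `|a2| * `|a2| = a2 * a4 by rewrite -expr2 normCK c24.
pose P : rat := x ^+ 2 + w ^+ 2 * ((m * l)%:R * (n * l)%:R) + y ^+ 2 * (m * l)%:R + z ^+ 2 * (n * l)%:R.
pose N : rat := P ^+ 2 - 4%:R * (x * w - y * z) ^+ 2 * ((m * l)%:R * (n * l)%:R).
have es : a1 * a3 + a2 * a4 = ratr P + ratr P.
  by rewrite /a1 /a2 /a3 /a4 /Ev /P; ring: hA hB.
have ep : (a1 * a3) * (a2 * a4) = ratr N.
  by rewrite /a1 /a2 /a3 /a4 /Ev /N /P; ring: hA hB.
set Tm := Num.max 1 `|a1| * _ in PS b1 b2 b3.
have hP : ratr P <= Tm.
  have : ratr P *+ 2 <= Tm *+ 2 by rewrite !mulr2n -es; apply: lerD; rewrite -?e1 -?e2.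
  by rewrite ler_pMn2r.
have hN : ratr N <= Tm by rewrite -ep -e1 -e2.
have hns2 : forall u v : rat, u ^+ 2 * m%:R = v ^+ 2 * n%:R -> u = 0 /\ v = 0.
  move=> u v e.
  have e' : (u * m%:R) ^+ 2 = v ^+ 2 * (m * n)%:R.
    rewrite natrM; transitivity (u ^+ 2 * m%:R * m%:R); first ring.
    by rewrite e; ring.
  have [h1 h2] := hns _ _ e'; split => //.
  move/eqP: h1; rewrite mulf_eq0 pnatr_eq0 (negbTE (lt0n_neq0 m0)) orbF; exact/eqP.
have key : forall q : rat, (q <= P \/ q <= N) -> ratr q <= M.
  move=> q hq; apply: le_trans MT; apply: le_trans PS.
  by case: hq => h; [apply: le_trans hP | apply: le_trans hN]; rewrite ler_rat.
have q1 : ((l * n)%:R / 256%:R : algC) = ratr ((l * n)%:R / 256%:R) by rewrite fmorph_div !rmorph_nat.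
have q2 : ((l ^ 2)%:R / 2304%:R : algC) = ratr ((l ^ 2)%:R / 2304%:R) by rewrite fmorph_div !rmorph_nat.
have [B1 B2] := RATF m n l x y z w m0 n0 l0 hns2 iy iz iw nyz nzw.
have F2 : (l ^ 2)%:R / 2304%:R <= M by rewrite q2; apply: key; right.
have F1 : (l * n)%:R / 256%:R <= M by rewrite q1; apply: key.
by split => // _.
Qed.
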